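(* Let $R$ be a commutative GPP-ring and $I$ a pure ideal of $R$. Then $R/I$ is a GPP-ring.
   Context: A commutative ring $A$ is a GPP-ring if for each $f\in A$ there exists $n\geq 1$ such that $Af^n$ is a projective $A$-module. An ideal $I$ of $R$ is pure if the canonical map $R\to R/I$ is flat; equivalently, for each $f\in I$ there exists $g\in I$ with $f(1-g)=0$. *)

(* Defs.v *)
From HB Require Import structures.
From mathcomp Require Import all_boot all_order all_algebra.
Set Implicit Arguments. Unset Strict Implicit. Unset Printing Implicit Defensive.
Import GRing.Theory.
Local Open Scope ring_scope.

Definition linear_on (A : comPzRingType) (N : lmodType A) (P : A -> Prop)
    (h : A -> N) : Prop :=
  forall (a : A) (x y : A), P x -> P y -> h (a * x + y) = a *: h x + h y.

(* A submodule P of the regular module A is a projective A-module: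
   lifting property along every surjective A-linear map. *)
Definition projective_submod (A : comPzRingType) (P : A -> Prop) : Prop :=
  forall (M N : lmodType A) (g : {linear M -> N}) (h : A -> N),
    (forall y : N, exists x : M, g x = y) ->
    linear_on P h ->
    exists k : A -> M, linear_on P k /\ (forall x, P x -> g (k x) = h x).

Definition principal_ideal (A : comPzRingType) (f : A) : A -> Prop :=
  fun x => exists a : A, x = a * f.

Definition GPP (A : comPzRingType) : Prop :=
  forall f : A, exists n : nat, (1 <= n)%N /\
    projective_submod (principal_ideal (f ^+ n)).

Definition is_ideal (R : comPzRingType) (I : R -> Prop) : Prop :=
  [/\ I 0, (forall x y, I x -> I y -> I (x + y)) & (forall a x, I x -> I (a * x))].

(* Pure ideal, via the element-wise characterization given in the paper. *)
Definition pure_ideal (R : comPzRingType) (I : R -> Prop) : Prop :=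
  is_ideal I /\ forall f, I f -> exists g, I g /\ f * (1 - g) = 0.

(* Main.v *)
Require Import Defs.
From HB Require Import structures.
From mathcomp Require Import all_boot all_order all_algebra.
From Stdlib Require Import ClassicalEpsilon.
Set Implicit Arguments. Unset Strict Implicit.
Import GRing.Theory.
Local Open Scope ring_scope.

Definition restr (R S : comPzRingType) (pi : {rmorphism R -> S}) (M : lmodType S) : Type := M.

HB.instance Definition _ (R S : comPzRingType) (pi : {rmorphism R -> S}) (M : lmodType S) := GRing.Zmodule.on (@restr R S pi M).

Section Restr.
Variables (R S : comPzRingType) (pi : {rmorphism R -> S}) (M : lmodType S).
Definition rscale (a : R) (m : restr pi M) : restr pi M := (pi a *: (m : M) : M).
Lemma rscaleA a b v : rscale a (rscale b v) = rscale (a * b) v.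
Proof. by rewrite /rscale scalerA rmorphM. Qed.
Lemma rscale1 : left_id 1 rscale.
Proof. by move=> v; rewrite /rscale rmorph1 scale1r. Qed.
Lemma rscaleDr : right_distributive rscale +%R.
Proof. by move=> a u v; rewrite /rscale scalerDr. Qed.
Lemma rscaleDl v : {morph rscale^~ v: a b / a + b}.
Proof. by move=> a b; rewrite /rscale rmorphD scalerDl. Qed.
End Restr.

HB.instance Definition _ (R S : comPzRingType) (pi : {rmorphism R -> S}) (M : lmodType S) := GRing.Zmodule_isLmodule.Build R (@restr R S pi M)
  (@rscaleA R S pi M) (@rscale1 R S pi M) (@rscaleDr R S pi M) (@rscaleDl R S pi M).

Section RLin.
Variables (R S : comPzRingType) (pi : {rmorphism R -> S}) (M N : lmodType S)
  (g : {linear M -> N}).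
Definition rg (m : restr pi M) : restr pi N := g m.
Lemma rg_lin : linear_for *:%R rg.
Proof. by move=> a u v; rewrite /rg /= linearP. Qed.
HB.instance Definition _ := GRing.isLinear.Build R (restr pi M) (restr pi N) *:%R rg rg_lin.
End RLin.

Theorem proposition2p9 (R S : comPzRingType) (I : R -> Prop)
    (pi : {rmorphism R -> S}) :
  GPP R -> pure_ideal I ->
  (forall s : S, exists r : R, pi r = s) ->
  (forall r : R, pi r = 0 <-> I r) ->
  GPP S.
Proof.
move=> GR [[I0 ID IM] Ipure] surj ker s.
have [r <-] := surj s.
have [n [n1 proj]] := GR r.
exists n; split => //.
move=> M N g h gsurj hlin.
set t := r ^+ n.
have pit : pi t = pi r ^+ n by rewrite rmorphXn.
have P0 : principal_ideal t 0 by exists 0; rewrite mul0r.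
have H1 : forall y : restr pi N, exists x : restr pi M, @rg _ _ pi _ _ g x = y.
  by move=> y; have [x gx] := gsurj y; exists x.
have H2 : linear_on (principal_ideal t) (fun x : R => (h (pi x) : restr pi N)).
  move=> a x y [b ->] [c ->].
  rewrite rmorphD rmorphM !rmorphM pit hlin //.
  + by exists (pi b).
  + by exists (pi c).
have [k' [kl kg]] := proj (restr pi M) (restr pi N) (@rg _ _ pi _ _ g)
   (fun x : R => (h (pi x) : restr pi N)) H1 H2.
have k'0 : k' 0 = 0.
  have := kl 1 0 0 P0 P0; rewrite mulr0 addr0 scale1r => /eqP.
  by move=> /eqP H; apply: (@addrI _ (k' 0)); rewrite addr0 -H.
have k'I : forall x, principal_ideal t x -> I x -> k' x = 0.
  move=> x Px Ix; have [g0 [Ig0 e]] := Ipure x Ix.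
  have := kl (1 - g0) x 0 Px P0.
  rewrite mulrC e add0r k'0 addr0 => H.
  move: H; change ((0 : M) = pi (1 - g0) *: (k' x : M) -> k' x = 0).
  by rewrite rmorphB rmorph1 (proj2 (ker g0) Ig0) subr0 scale1r => <-.
have k'eq : forall x y, principal_ideal t x -> principal_ideal t y -> pi x = pi y -> k' x = k' y.
  move=> x y [b ->] [c ->] e.
  have Pd : principal_ideal t ((b - c) * t) by exists (b - c).
  have := kl 1 _ _ Pd (ex_intro _ c erefl).
  rewrite mul1r scale1r mulrBl subrK => ->.
  rewrite k'I ?add0r //; first by exists (b - c); rewrite mulrBl.
  by apply/ker; rewrite rmorphB e subrr.
pose k := fun s : S => k' (epsilon (inhabits 0) (fun x : R => principal_ideal t x /\ pi x = s)).
have kpi : forall x, principal_ideal t x -> k (pi x) = k' x.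
  move=> x Px; rewrite /k.
  have [Px' e] := epsilon_spec (inhabits 0) (fun x' : R => principal_ideal t x' /\ pi x' = pi x) (ex_intro _ x (conj Px erefl)).
  exact: k'eq.
have Spi : forall s, principal_ideal (pi r ^+ n) s -> exists2 x, principal_ideal t x & s = pi x.
  move=> _ [a ->]; have [b <-] := surj a; exists (b * t); first by exists b.
  by rewrite rmorphM pit.
exists k; split.
- move=> a _ _ /Spi [x Px ->] /Spi [y Py ->].
  have [c <-] := surj a.
  have Pcxy : principal_ideal t (c * x + y).
    by case: Px => b ->; case: Py => d ->; exists (c * b + d); rewrite mulrDl mulrA.
  rewrite -rmorphM -rmorphD !kpi // kl //.
- move=> _ /Spi [x Px ->]; rewrite kpi //; exact: kg.
Qed.
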